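(* Let $n\ge 4$, let $r_1,r_2,r_3\in\mathbb{Z}_+$ with $r_1+r_2+r_3=n-1$, and let $\alpha_1,\alpha_2,\alpha_3$ be reals with $-1<\alpha_1<1$, $0\le\alpha_2,\alpha_3<1$, $\alpha_1+\alpha_2+\alpha_3=1$, $r_1+\alpha_1\ge r_2+\alpha_2$ and $r_1+\alpha_1\ge r_3+\alpha_3$. Then $$\mathfrak{L}_n(r_1,r_2,r_3,\alpha_1,\alpha_2,\alpha_3)\le \mathfrak{L}_n(n-1,0,0,\alpha_1,\alpha_2,\alpha_3)+2^{2n/3}(10+2\ln n).$$
   Context: Points of a triangle are identified with barycentric coordinates $\lambda=(\lambda_1,\lambda_2,\lambda_3)$, $\lambda_r\ge0$, $\sum\lambda_r=1$. For an integer $n\ge1$ let $I=\{i=(i_1,i_2,i_3)\in\mathbb{Z}_+^3: i_1+i_2+i_3=n\}$, and let $l_i(\lambda)=\prod_{s=1}^{3}\frac{1}{i_s!}\prod_{t=0}^{i_s-1}(n\lambda_s-t)$ (the Lagrange fundamental polynomials for the equally spaced nodes $i/n$, $i\in I$). The Lebesgue function is $\mathcal{L}_n(\lambda)=\sum_{i\in I}|l_i(\lambda)|$. For $r_s\in\mathbb{Z}_+$ with $r_1+r_2+r_3=n-1$ and reals $\alpha_s$ with $\alpha_1+\alpha_2+\alpha_3=1$, write $\mathfrak{L}_n(r_1,r_2,r_3,\alpha_1,\alpha_2,\alpha_3)=\mathcal{L}_n(\lambda)$ where $\lambda_s=(r_s+\alpha_s)/n$, $s=1,2,3$. *)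

(* Defs.v *)
From Stdlib Require Import Reals Lra Lia Arith Factorial.
Open Scope R_scope.

Fixpoint falling (x : R) (k : nat) : R :=
  match k with
  | O => 1
  | S k' => falling x k' * (x - INR k')
  end.

Definition fac_factor (n : nat) (lam : R) (k : nat) : R :=
  falling (INR n * lam) k / INR (fact k).

(* Lagrange fundamental polynomial l_i(lambda) for i = (i1,i2,i3), i1+i2+i3 = n *)
Definition lagr (n : nat) (i1 i2 i3 : nat) (l1 l2 l3 : R) : R :=
  fac_factor n l1 i1 * fac_factor n l2 i2 * fac_factor n l3 i3.

Fixpoint sum_upto (m : nat) (f : nat -> R) : R :=
  match m with
  | O => f O
  | S m' => sum_upto m' f + f m
  end.

Definition lebesgue (n : nat) (l1 l2 l3 : R) : R :=
  sum_upto n (fun i1 =>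
    sum_upto (n - i1) (fun i2 =>
      Rabs (lagr n i1 i2 (n - i1 - i2) l1 l2 l3))).

Definition frakL (n r1 r2 r3 : nat) (a1 a2 a3 : R) : R :=
  lebesgue n ((INR r1 + a1) / INR n) ((INR r2 + a2) / INR n) ((INR r3 + a3) / INR n).

(* Main.v *)
Require Import Defs.
From Stdlib Require Import Reals.
From Stdlib Require Import Lra Lia Arith Factorial.
Open Scope R_scope.


Lemma su_ext : forall m f g, (forall j, (j <= m)%nat -> f j = g j) -> sum_upto m f = sum_upto m g.
Proof. induction m; intros f g H; simpl. apply H; lia.
  rewrite (IHm f g) by (intros; apply H; lia). rewrite H by lia. reflexivity. Qed.

Lemma su_le : forall m f g, (forall j, (j <= m)%nat -> f j <= g j) -> sum_upto m f <= sum_upto m g.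
Proof. induction m; intros f g H; simpl. apply H; lia.
  apply Rplus_le_compat. apply IHm; intros; apply H; lia. apply H; lia. Qed.

Lemma su_plus : forall m f g, sum_upto m (fun j => f j + g j) = sum_upto m f + sum_upto m g.
Proof. induction m; intros; simpl; try rewrite IHm; ring. Qed.

Lemma su_scal : forall m c f, sum_upto m (fun j => c * f j) = c * sum_upto m f.
Proof. induction m; intros; simpl; try rewrite IHm; ring. Qed.

Lemma su_nonneg : forall m f, (forall j, (j <= m)%nat -> 0 <= f j) -> 0 <= sum_upto m f.
Proof. induction m; intros f H; simpl. apply H; lia.
  apply Rplus_le_le_0_compat. apply IHm; intros; apply H; lia. apply H; lia. Qed.

Lemma su_shift : forall m f, sum_upto (S m) f = f O + sum_upto m (fun j => f (S j)).
Proof. induction m; intros; simpl. reflexivity.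
  simpl in IHm. rewrite IHm. ring. Qed.

Lemma su_rev : forall m f, sum_upto m f = sum_upto m (fun j => f (m - j)%nat).
Proof. induction m; intros f. simpl. reflexivity.
  rewrite (su_shift m (fun j => f (S m - j)%nat)). simpl sum_upto at 1. rewrite (IHm f).
  replace (f (S m - 0)%nat) with (f (S m)) by (f_equal; lia).
  rewrite Rplus_comm. f_equal. Qed.

Lemma su_single : forall m f i, (i <= m)%nat -> (forall j, (j <= m)%nat -> 0 <= f j) -> f i <= sum_upto m f.
Proof. induction m; intros f i Hi H; simpl.
  replace i with O by lia. lra.
  destruct (Nat.eq_dec i (S m)). subst. assert (0 <= sum_upto m f) by (apply su_nonneg; intros; apply H; lia). lra.
  assert (f i <= sum_upto m f) by (apply IHm; [lia| intros; apply H; lia]). assert (0 <= f (S m)) by (apply H; lia). lra. Qed.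

Lemma su_trunc : forall K m f, (m <= K)%nat -> (forall j, (m < j)%nat -> f j = 0) -> sum_upto K f = sum_upto m f.
Proof. induction K; intros m f Hm H. replace m with O by lia. reflexivity.
  destruct (Nat.eq_dec m (S K)). subst. reflexivity.
  simpl. rewrite (IHK m f) by (auto; lia). rewrite H by lia. ring. Qed.

Lemma su_shift_le : forall m r g, (forall j, 0 <= g j) -> sum_upto m (fun j => g (j + r)%nat) <= sum_upto (m + r) g.
Proof. induction m; intros r g H; simpl.
  apply su_single; auto; lia.
  replace (S (m + r)) with (S m + r)%nat by lia. simpl.
  pose proof (IHm r g H). lra. Qed.

Definition Dsum (n : nat) (h : nat -> nat -> R) := sum_upto n (fun i => sum_upto (n - i) (fun j => h i j)).
Definition diag (s : nat) (h : nat -> nat -> R) := sum_upto s (fun i => h i (s - i)%nat).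

Lemma su_S : forall m f, sum_upto (S m) f = sum_upto m f + f (S m).
Proof. reflexivity. Qed.

Lemma Dsum_S : forall n h, Dsum (S n) h = Dsum n h + diag (S n) h.
Proof. intros n h. unfold Dsum, diag. rewrite su_S. rewrite Nat.sub_diag.
  rewrite (su_S n (fun i => h i (S n - i)%nat)). rewrite Nat.sub_diag.
  replace (sum_upto n (fun i => sum_upto (S n - i) (fun j => h i j)))
    with (sum_upto n (fun i => sum_upto (n - i) (fun j => h i j) + h i (S n - i)%nat)).
  rewrite su_plus. simpl. ring.
  apply su_ext. intros j Hj. replace (S n - j)%nat with (S (n - j)) by lia. rewrite su_S. reflexivity. Qed.

Lemma Dsum_diag : forall n h, Dsum n h = sum_upto n (fun s => diag s h).
Proof. induction n; intros h. unfold Dsum, diag. simpl. reflexivity.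
  rewrite Dsum_S, IHn. reflexivity. Qed.

Lemma diag_swap : forall s h, diag s h = diag s (fun i j => h j i).
Proof. intros s h. unfold diag. rewrite su_rev. apply su_ext. intros j Hj. f_equal. lia. Qed.

Lemma Dsum_swap : forall n h, Dsum n h = Dsum n (fun i j => h j i).
Proof. intros. rewrite !Dsum_diag. apply su_ext. intros. apply diag_swap. Qed.

Definition conv (f g : nat -> R) (K : nat) := sum_upto K (fun j => f j * g (K - j)%nat).
Definition LLg (n : nat) (f g h : nat -> R) := sum_upto n (fun i => f i * conv g h (n - i)%nat).

Lemma conv_comm : forall f g K, conv f g K = conv g f K.
Proof. intros. unfold conv. rewrite su_rev. apply su_ext. intros j Hj.
  replace (K - (K - j))%nat with j by lia. ring. Qed.

Lemma LLg_swap23 : forall n f g h, LLg n f g h = LLg n f h g.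
Proof. intros. unfold LLg. apply su_ext. intros. rewrite conv_comm. reflexivity. Qed.

Lemma LLg_Dsum : forall n f g h, LLg n f g h = Dsum n (fun i j => f i * g j * h (n - i - j)%nat).
Proof. intros. unfold LLg, Dsum, conv. apply su_ext. intros i Hi. rewrite <- su_scal.
  apply su_ext. intros. ring. Qed.

Lemma LLg_swap12 : forall n f g h, LLg n f g h = LLg n g f h.
Proof. intros. rewrite !LLg_Dsum. rewrite Dsum_swap. unfold Dsum. apply su_ext. intros i Hi.
  apply su_ext. intros j Hj. replace (n - j - i)%nat with (n - i - j)%nat by lia. ring. Qed.


Definition bin (x : R) (k : nat) : R := falling x k / INR (fact k).
Definition A (x : R) (k : nat) : R := Rabs (bin x k).

Lemma fact_pos_R : forall k, 0 < INR (fact k).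
Proof. intros. apply lt_0_INR. apply lt_O_fact. Qed.

Lemma falling_S : forall x k, falling x (S k) = falling x k * (x - INR k).
Proof. reflexivity. Qed.

Lemma falling_add : forall x p q, falling x (p + q) = falling x p * falling (x - INR p) q.
Proof. intros x p q. induction q. simpl. rewrite Nat.add_0_r. ring.
  rewrite Nat.add_succ_r. rewrite !falling_S. rewrite IHq. rewrite plus_INR. ring. Qed.

Lemma falling_shift1 : forall x k, falling (x + 1) (S k) = (x + 1) * falling x k.
Proof. intros x k. induction k. simpl. ring.
  rewrite falling_S. rewrite IHk. rewrite falling_S. rewrite S_INR. ring. Qed.

Lemma falling_nat : forall d k, falling (INR (d + k)) k * INR (fact d) = INR (fact (d + k)).
Proof. intros d k. induction k. simpl. rewrite Nat.add_0_r. ring.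
  rewrite Nat.add_succ_r. rewrite S_INR. rewrite falling_shift1. 
  replace (fact (S (d + k))) with (S (d + k) * fact (d+k))%nat by reflexivity.
  rewrite mult_INR, S_INR, <- IHk. ring. Qed.

Lemma falling_nonneg : forall k x, INR k <= x + 1 -> 0 <= falling x k.
Proof. induction k; intros x H. simpl; lra.
  rewrite falling_S. rewrite S_INR in H. apply Rmult_le_pos. apply IHk. pose proof (pos_INR k). lra. lra. Qed.

Lemma falling_mono : forall k x y, INR k <= x + 1 -> x <= y -> falling x k <= falling y k.
Proof. induction k; intros x y H Hxy. simpl; lra.
  rewrite !falling_S. rewrite S_INR in H. apply Rmult_le_compat.
  apply falling_nonneg; pose proof (pos_INR k); lra. lra.
  apply IHk; pose proof (pos_INR k); lra. lra. Qed.

Lemma falling_nat_zero : forall a k, (a < k)%nat -> falling (INR a) k = 0.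
Proof. intros a k H. replace k with (S a + (k - S a))%nat by lia. rewrite falling_add.
  rewrite falling_S. replace (INR a - INR a) with 0 by ring. ring. Qed.

Lemma falling_natnonneg : forall a k, 0 <= falling (INR a) k.
Proof. intros a k. destruct (le_lt_dec k a). apply falling_nonneg. apply le_INR in l. lra.
  rewrite falling_nat_zero; auto; lra. Qed.

Lemma bin_S : forall x k, bin x (S k) = bin x k * (x - INR k) / INR (S k).
Proof. intros. unfold bin. rewrite falling_S.
  replace (fact (S k)) with (S k * fact k)%nat by reflexivity. rewrite mult_INR.
  pose proof (fact_pos_R k). pose proof (lt_0_INR (S k) ltac:(lia)). field. lra. Qed.

Lemma bin_0 : forall x, bin x 0 = 1.
Proof. intros; unfold bin; simpl; field. Qed.

Lemma bin_pascal : forall x k, bin (x + 1) (S k) = bin x (S k) + bin x k.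
Proof. intros x k. unfold bin. rewrite falling_shift1, falling_S.
  replace (fact (S k)) with (S k * fact k)%nat by reflexivity. rewrite mult_INR, S_INR.
  pose proof (fact_pos_R k). pose proof (pos_INR k). field. lra. Qed.

Lemma bin_nat_nonneg : forall a k, 0 <= bin (INR a) k.
Proof. intros. unfold bin. unfold Rdiv. apply Rmult_le_pos. apply falling_natnonneg. left; apply Rinv_0_lt_compat, fact_pos_R. Qed.

Lemma bin_nat_zero : forall a k, (a < k)%nat -> bin (INR a) k = 0.
Proof. intros. unfold bin. rewrite falling_nat_zero; auto. unfold Rdiv; ring. Qed.

Lemma bin_nat_diag : forall a, bin (INR a) a = 1.
Proof. intros. unfold bin. pose proof (falling_nat 0 a). simpl in H. rewrite Rmult_1_r in H.
  rewrite H. pose proof (fact_pos_R a). field. lra. Qed.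

Lemma bin_rec : forall x K, INR (S K) * bin x (S K) = (x - INR K) * bin x K.
Proof. intros. rewrite bin_S. pose proof (lt_0_INR (S K) ltac:(lia)). field. lra. Qed.

Lemma vandermonde : forall a b K, conv (bin a) (bin b) K = bin (a + b) K.
Proof.
  intros a b K. induction K.
  - unfold conv. simpl. rewrite !bin_0. ring.
  - assert (H : INR (S K) * conv (bin a) (bin b) (S K) = (a + b - INR K) * conv (bin a) (bin b) K).
    { unfold conv.
      transitivity (sum_upto (S K) (fun j => INR j * bin a j * bin b (S K - j)%nat)
                    + sum_upto (S K) (fun j => bin a j * (INR (S K - j) * bin b (S K - j)%nat))).
      { rewrite <- su_plus. rewrite <- su_scal. apply su_ext. intros j Hj.
        rewrite minus_INR by lia. ring. }
      rewrite su_shift. rewrite (su_ext K (fun j => INR (S j) * bin a (S j) * bin b (S K - S j)%nat)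
              (fun j => (a - INR j) * bin a j * bin b (K - j)%nat)).
      2:{ intros j Hj. rewrite bin_rec. simpl (S K - S j)%nat. ring. }
      rewrite su_S. rewrite Nat.sub_diag.
      rewrite (su_ext K (fun j => bin a j * (INR (S K - j) * bin b (S K - j)%nat))
              (fun j => bin a j * ((b - INR (K - j)) * bin b (K - j)%nat))).
      2:{ intros j Hj. replace (S K - j)%nat with (S (K - j)) by lia. rewrite bin_rec. ring. }
      simpl (INR 0). 
      replace (sum_upto K (fun j => (a - INR j) * bin a j * bin b (K - j)%nat))
        with (sum_upto K (fun j => bin a j * bin b (K - j)%nat * (a - INR j))) by (apply su_ext; intros; ring).
      replace (sum_upto K (fun j => bin a j * ((b - INR (K - j)) * bin b (K - j)%nat)))
        with (sum_upto K (fun j => bin a j * bin b (K - j)%nat * (b - INR (K - j)))) by (apply su_ext; intros; ring).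
      replace (0 * bin a 0 * bin b (S K - 0)%nat) with 0 by ring.
      replace (bin a (S K) * (0 * bin b 0)) with 0 by ring.
      rewrite Rplus_0_l, Rplus_0_r.
      rewrite <- su_plus. rewrite <- su_scal. apply su_ext. intros j Hj.
      rewrite minus_INR by lia. ring. }
    rewrite IHK in H. rewrite <- bin_rec in H.
    pose proof (lt_0_INR (S K) ltac:(lia)).
    apply Rmult_eq_reg_l with (INR (S K)). replace (a + b - INR K) with ((a + b) - INR K) in H by ring.
    lra. lra.
Qed.


Definition ng (y : R) := (Rabs y - y) / 2.
Lemma ng_nonneg : forall y, 0 <= ng y.
Proof. intros. unfold ng. pose proof (Rle_abs y). lra. Qed.
Lemma ng_le_abs : forall y, ng y <= Rabs y.
Proof. intros. unfold ng. pose proof (Rabs_pos y). pose proof (Rle_abs (-y)). rewrite Rabs_Ropp in H0. lra. Qed.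
Lemma ng_pos : forall y, 0 <= y -> ng y = 0.
Proof. intros. unfold ng. rewrite Rabs_right by lra. lra. Qed.
Lemma ng_scale : forall c y, 0 <= c -> ng (c * y) = c * ng y.
Proof. intros. unfold ng. rewrite Rabs_mult. rewrite (Rabs_right c) by lra. field. Qed.
Lemma abs_ng : forall y, Rabs y = y + 2 * ng y.
Proof. intros. unfold ng. lra. Qed.

Lemma fact_ineq : forall r m, (fact (S r) * fact (S m) <= fact (r + S m))%nat.
Proof. intros r m. induction m. rewrite Nat.add_1_r. simpl (fact 1). lia.
  rewrite Nat.add_succ_r. change (fact (S (S m))) with (S (S m) * fact (S m))%nat.
  change (fact (S (r + S m))) with (S (r + S m) * fact (r + S m))%nat.
  apply Nat.le_trans with (S (S m) * fact (r + S m))%nat. nia. apply Nat.mul_le_mono_r. lia. Qed.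

Definition badf (a : R) (rho : nat) (j : nat) : R := if Nat.ltb rho j then A a j else 0.

Lemma badf_nonneg : forall a rho j, 0 <= badf a rho j.
Proof. intros. unfold badf. destruct (Nat.ltb rho j). apply Rabs_pos. lra. Qed.

Lemma bin_nonneg_le : forall x j, INR j <= x + 1 -> 0 <= bin x j.
Proof. intros. unfold bin. unfold Rdiv. apply Rmult_le_pos. apply falling_nonneg; auto.
  left; apply Rinv_0_lt_compat, fact_pos_R. Qed.

Lemma bin_shift_le : forall a j r, INR j <= a -> bin a j <= bin (a + INR r) (j + r).
Proof. intros a j r Hj. unfold bin. rewrite Nat.add_comm. rewrite falling_add.
  replace (a + INR r - INR r) with a by ring.
  pose proof (falling_nat j r) as Hf. rewrite (Nat.add_comm j r) in Hf. rewrite <- Hf.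
  assert (H0 : 0 <= falling a j) by (apply falling_nonneg; lra).
  assert (H1 : 0 < falling (INR (r + j)) r).
  { pose proof (fact_pos_R (r + j)). pose proof (fact_pos_R j).
    rewrite <- Hf in H. apply Rmult_lt_reg_r with (INR (fact j)); auto. lra. }
  assert (H2 : falling (INR (r + j)) r <= falling (a + INR r) r).
  { apply falling_mono. rewrite plus_INR. pose proof (pos_INR j). lra. rewrite plus_INR. lra. }
  pose proof (fact_pos_R j).
  unfold Rdiv. rewrite Rinv_mult.
  replace (falling (a + INR r) r * falling a j * (/ falling (INR (r + j)) r * / INR (fact j)))
     with ((falling (a + INR r) r / falling (INR (r + j)) r) * (falling a j * / INR (fact j))) by (field; lra).
  rewrite <- (Rmult_1_l (falling a j * / INR (fact j))) at 1.
  apply Rmult_le_compat_r. apply Rmult_le_pos; auto. left; apply Rinv_0_lt_compat; auto.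
  apply Rmult_le_reg_r with (falling (INR (r + j)) r); auto. unfold Rdiv. rewrite Rmult_assoc, Rinv_l by lra. lra.
Qed.

Lemma bin_split_kappa : forall r beta m, 0 <= beta <= 1 ->
  exists kappa, 0 <= kappa <= 1 /\ bin (INR r + beta) (r + S m) = kappa * bin beta (S m).
Proof. intros r beta m Hb.
  exists (falling (INR r + beta) r * INR (fact (S m)) / INR (fact (r + S m))).
  pose proof (fact_pos_R (S m)). pose proof (fact_pos_R (r + S m)).
  assert (F0 : 0 <= falling (INR r + beta) r) by (apply falling_nonneg; lra).
  assert (F1 : falling (INR r + beta) r <= INR (fact (S r))).
  { pose proof (falling_nat 1 r). simpl (fact 1) in H1. rewrite Rmult_1_r in H1.
    replace (1 + r)%nat with (S r) in H1 by lia. rewrite <- H1. apply falling_mono. lra.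
    rewrite S_INR. lra. }
  split. split. unfold Rdiv. apply Rmult_le_pos. apply Rmult_le_pos; lra. left; apply Rinv_0_lt_compat; lra.
  apply Rmult_le_reg_r with (INR (fact (r + S m))); auto. unfold Rdiv. rewrite Rmult_assoc, Rinv_l by lra.
  rewrite Rmult_1_r, Rmult_1_l. apply Rle_trans with (INR (fact (S r)) * INR (fact (S m))).
  apply Rmult_le_compat_r; lra. rewrite <- mult_INR. apply le_INR. apply fact_ineq.
  unfold bin. rewrite falling_add. replace (INR r + beta - INR r) with beta by ring. field. lra.
Qed.

Definition tK (a b : R) (K j : nat) := bin a j * bin b (K - j)%nat.

Lemma key_point : forall (a beta : R) (rho r K : nat), INR rho <= a -> 0 <= beta <= 1 -> forall j, (j <= K)%nat ->
  ng (tK a (INR r + beta) K j) <= badf a rho j * A (INR r + beta) (K - j)%nat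
      + (if Nat.leb (j + r) K then ng (tK (a + INR r) beta K (j + r)%nat) else 0).
Proof.
  intros a beta rho r K Ha Hb j Hj. set (b := INR r + beta). set (a' := a + INR r).
  assert (E0 : 0 <= (if Nat.leb (j + r) K then ng (tK a' beta K (j + r)%nat) else 0)).
  { destruct (Nat.leb (j + r) K). apply ng_nonneg. lra. }
  unfold badf. destruct (Nat.ltb rho j) eqn:E.
  - unfold A. rewrite <- Rabs_mult. pose proof (ng_le_abs (tK a b K j)). unfold tK in *. lra.
  - apply Nat.ltb_ge in E. rewrite Rmult_0_l, Rplus_0_l.
    assert (Pa : 0 <= bin a j). { apply bin_nonneg_le. apply le_INR in E. lra. }
    destruct (le_lt_dec (K - j) r) as [Hr | Hr].
    + rewrite ng_pos. auto. unfold tK. apply Rmult_le_pos; auto. apply bin_nonneg_le. unfold b.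
      apply le_INR in Hr. lra.
    + replace (Nat.leb (j + r) K) with true by (symmetry; apply Nat.leb_le; lia).
      set (m := (K - j - r - 1)%nat).
      assert (Em : (K - j = r + S m)%nat) by (unfold m; lia).
      assert (Em' : (K - (j + r) = S m)%nat) by (unfold m; lia).
      unfold tK. rewrite Em, Em'.
      destruct (bin_split_kappa r beta m Hb) as [kap [Hk Hbk]]. fold b in Hbk. rewrite Hbk.
      replace (bin a j * (kap * bin beta (S m))) with ((bin a j * kap) * bin beta (S m)) by ring.
      rewrite ng_scale by (apply Rmult_le_pos; lra).
      assert (Pa' : bin a j <= bin a' (j + r)). { apply bin_shift_le. apply le_INR in E. lra. }
      rewrite ng_scale by lra.
      pose proof (ng_nonneg (bin beta (S m))).
      apply Rmult_le_compat_r; auto.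
      apply Rle_trans with (bin a j). rewrite <- (Rmult_1_r (bin a j)) at 2. apply Rmult_le_compat_l; lra. auto.
Qed.

Lemma conv_abs : forall x y K, conv (A x) (A y) K = bin (x + y) K + 2 * sum_upto K (fun j => ng (bin x j * bin y (K - j)%nat)).
Proof. intros. rewrite <- vandermonde. unfold conv. rewrite <- su_scal, <- su_plus. apply su_ext.
  intros. unfold A. rewrite <- Rabs_mult. apply abs_ng. Qed.

Lemma key_lemma : forall (a beta : R) (rho r K : nat), INR rho <= a -> 0 <= beta <= 1 ->
  conv (A a) (A (INR r + beta)) K <= conv (A (a + INR r)) (A beta) K + 2 * conv (badf a rho) (A (INR r + beta)) K.
Proof.
  intros a beta rho r K Ha Hb.
  rewrite (conv_abs a), (conv_abs (a + INR r) beta).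
  replace (a + INR r + beta) with (a + (INR r + beta)) by ring.
  cut (sum_upto K (fun j => ng (tK a (INR r + beta) K j)) <= sum_upto K (fun j => ng (tK (a + INR r) beta K j)) + conv (badf a rho) (A (INR r + beta)) K).
  { unfold tK. intros; lra. }
  apply Rle_trans with (sum_upto K (fun j => badf a rho j * A (INR r + beta) (K - j)%nat + (if Nat.leb (j + r) K then ng (tK (a + INR r) beta K (j + r)%nat) else 0))).
  apply su_le. apply key_point; auto.
  rewrite su_plus. fold (conv (badf a rho) (A (INR r + beta)) K). rewrite Rplus_comm. apply Rplus_le_compat_r.
  destruct (le_lt_dec r K) as [HrK | HrK].
  - rewrite (su_trunc K (K - r) _ ltac:(lia)).
    2:{ intros j Hj. replace (Nat.leb (j + r) K) with false by (symmetry; apply Nat.leb_gt; lia). reflexivity. }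
    rewrite (su_ext (K - r) _ (fun j => ng (tK (a + INR r) beta K (j + r)%nat))).
    2:{ intros j Hj. replace (Nat.leb (j + r) K) with true by (symmetry; apply Nat.leb_le; lia). reflexivity. }
    replace K with (K - r + r)%nat at 2 by lia. apply (su_shift_le (K - r) r (fun j => ng (tK (a + INR r) beta K j))). intros; apply ng_nonneg.
  - rewrite (su_ext K _ (fun _ => 0)).
    2:{ intros j Hj. replace (Nat.leb (j + r) K) with false by (symmetry; apply Nat.leb_gt; lia). reflexivity. }
    apply Rle_trans with (sum_upto K (fun _ => 0)). right; reflexivity.
    apply su_le. intros; apply ng_nonneg.
Qed.


Lemma step_lemma : forall n w a beta rho r, (forall i, 0 <= w i) -> INR rho <= a -> 0 <= beta <= 1 ->
  LLg n w (A a) (A (INR r + beta)) <= LLg n w (A (a + INR r)) (A beta) + 2 * LLg n w (badf a rho) (A (INR r + beta)).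
Proof. intros. unfold LLg. rewrite <- su_scal, <- su_plus. apply su_le. intros i Hi.
  pose proof (key_lemma a beta rho r (n - i) H0 H1). pose proof (H i). nra. Qed.

Lemma A_S : forall x k, A x (S k) = A x k * Rabs (x - INR k) / INR (S k).
Proof. intros. unfold A. rewrite bin_S. unfold Rdiv. rewrite !Rabs_mult.
  rewrite (Rabs_right (/ INR (S k))). ring. left. apply Rinv_0_lt_compat, lt_0_INR; lia. Qed.

Lemma A_nonneg : forall x k, 0 <= A x k.
Proof. intros; apply Rabs_pos. Qed.

Lemma falling_abs_le : forall rho x k, INR rho <= x <= INR rho + 1 -> (k <= S rho)%nat ->
  Rabs (falling x k) <= falling (INR (S rho)) k.
Proof. intros rho x k Hx. induction k; intros Hk. simpl. rewrite Rabs_R1. lra.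
  rewrite !falling_S, Rabs_mult. apply Rmult_le_compat. apply Rabs_pos. apply Rabs_pos.
  apply IHk; lia. apply le_INR in Hk. rewrite !S_INR in *. rewrite Rabs_right; lra. Qed.

Lemma A_le_bin : forall rho x k, INR rho <= x <= INR rho + 1 -> (k <= S rho)%nat -> A x k <= bin (INR (S rho)) k.
Proof. intros. unfold A, bin. unfold Rdiv. rewrite Rabs_mult. rewrite (Rabs_right (/ _)).
  apply Rmult_le_compat_r. left; apply Rinv_0_lt_compat, fact_pos_R. apply falling_abs_le; auto.
  left; apply Rinv_0_lt_compat, fact_pos_R. Qed.

Lemma A_tail1 : forall rho x p, INR rho <= x <= INR rho + 1 -> A x (S rho + p) <= 1.
Proof. intros rho x p Hx. induction p.
  rewrite Nat.add_0_r. rewrite <- (bin_nat_diag (S rho)). apply A_le_bin; auto.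
  rewrite Nat.add_succ_r, A_S. pose proof (A_nonneg x (S rho + p)).
  assert (Rabs (x - INR (S rho + p)) <= INR (S (S rho + p))).
  { rewrite Rabs_left1. rewrite !S_INR, plus_INR, S_INR. pose proof (pos_INR p). pose proof (pos_INR rho). lra.
    rewrite plus_INR, S_INR. pose proof (pos_INR p). pose proof (pos_INR rho). lra. }
  pose proof (lt_0_INR (S (S rho + p)) ltac:(lia)).
  apply Rmult_le_reg_r with (INR (S (S rho + p))); auto. unfold Rdiv. rewrite Rmult_assoc, Rinv_l by lra.
  rewrite Rmult_1_r. rewrite Rmult_1_l. apply Rle_trans with (1 * INR (S (S rho + p))).
  apply Rmult_le_compat; auto. apply Rabs_pos. lra. Qed.

Lemma A_tail2 : forall rho x p, (1 <= rho)%nat -> INR rho <= x <= INR rho + 1 ->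
  A x (S rho + p) <= 2 / (INR (S p) * INR (S (S p))).
Proof. intros rho x p Hr Hx. induction p.
  rewrite Nat.add_0_r. replace (2 / (INR 1 * INR 2)) with 1 by (simpl; field). rewrite <- (bin_nat_diag (S rho)). apply A_le_bin; auto.
  rewrite Nat.add_succ_r, A_S. pose proof (A_nonneg x (S rho + p)).
  assert (Rabs (x - INR (S rho + p)) <= INR (S p)).
  { rewrite Rabs_left1. rewrite !S_INR, plus_INR, S_INR. pose proof (pos_INR p). pose proof (pos_INR rho). lra.
    rewrite plus_INR, S_INR. pose proof (pos_INR p). pose proof (pos_INR rho). lra. }
  assert (INR (S (S (S p))) <= INR (S (S rho + p))). { apply le_INR. lia. }
  pose proof (pos_INR p). rewrite !S_INR in *. rewrite plus_INR in *. rewrite S_INR in *.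
  apply Rle_trans with (2 / ((INR p + 1) * (INR p + 1 + 1)) * (INR p + 1) / (INR p + 1 + 1 + 1)).
  unfold Rdiv. apply Rmult_le_compat. apply Rmult_le_pos; auto. apply Rabs_pos.
  left; apply Rinv_0_lt_compat; lra. apply Rmult_le_compat; auto. apply Rabs_pos.
  apply Rinv_le_contravar; lra.
  right. field. lra. Qed.

Definition Vb (m k : nat) : R := if Nat.leb k m then bin (INR m) k else 1.

Lemma A_le_Vb : forall rho x k, INR rho <= x <= INR rho + 1 -> A x k <= Vb (S rho) k.
Proof. intros. unfold Vb. destruct (Nat.leb k (S rho)) eqn:E.
  apply Nat.leb_le in E. apply A_le_bin; auto.
  apply Nat.leb_gt in E. replace k with (S rho + (k - S rho))%nat by lia. apply A_tail1; auto. Qed.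

Lemma Vb_nonneg : forall m k, 0 <= Vb m k.
Proof. intros. unfold Vb. destruct (Nat.leb k m). apply bin_nat_nonneg. lra. Qed.

Lemma bin_psum : forall a M, sum_upto M (fun i => bin (INR a) i) <= 2 ^ a.
Proof. induction a; intros M.
  - destruct M. simpl. rewrite bin_0. lra.
    rewrite su_shift. rewrite bin_0. rewrite (su_ext M _ (fun _ => 0)). 
    assert (sum_upto M (fun _ => 0) = 0). { clear. induction M; simpl; try rewrite IHM; ring. }
    rewrite H. simpl; lra. intros. apply bin_nat_zero. lia.
  - destruct M. simpl. rewrite bin_0. pose proof (pow_R1_Rle 2 a ltac:(lra)). lra.
    rewrite su_shift. rewrite bin_0. rewrite S_INR.
    rewrite (su_ext M _ (fun j => bin (INR a) (S j) + bin (INR a) j)) by (intros; apply bin_pascal).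
    rewrite su_plus. pose proof (IHa (S M)). rewrite su_shift in H. rewrite bin_0 in H.
    pose proof (IHa M) as H1. change (fun i : nat => bin (INR a) i) with (bin (INR a)) in H1. simpl. lra. Qed.

Lemma bin_le_pow : forall b k, bin (INR (S b)) k <= 2 ^ b.
Proof. intros b k. destruct k. rewrite bin_0. apply pow_R1_Rle. lra.
  rewrite S_INR, bin_pascal. pose proof (bin_psum b (S k)). rewrite su_S in H.
  pose proof (su_single k (fun i => bin (INR b) i) k (le_n k) (fun j _ => bin_nat_nonneg b j)). simpl in H0. lra. Qed.

Lemma Vb_le_pow : forall b k, Vb (S b) k <= 2 ^ b.
Proof. intros. unfold Vb. destruct (Nat.leb k (S b)). apply bin_le_pow. apply pow_R1_Rle; lra. Qed.

Lemma count_gt : forall a M, sum_upto M (fun i => if Nat.ltb a i then 1 else 0) <= INR (M - a).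
Proof. intros a M. induction M. simpl. destruct (Nat.ltb a 0) eqn:E. apply Nat.ltb_lt in E; lia. simpl; lra.
  rewrite su_S. destruct (Nat.ltb a (S M)) eqn:E. apply Nat.ltb_lt in E.
  replace (S M - a)%nat with (S (M - a)) by lia. rewrite S_INR. lra.
  apply Nat.ltb_ge in E. replace (S M - a)%nat with 0%nat by lia. replace (M - a)%nat with 0%nat in IHM by lia. lra. Qed.

Lemma Vb_psum : forall a M, sum_upto M (fun i => Vb a i) <= 2 ^ a + INR (M - a).
Proof. intros. apply Rle_trans with (sum_upto M (fun i => bin (INR a) i + (if Nat.ltb a i then 1 else 0))).
  apply su_le. intros j Hj. unfold Vb. destruct (Nat.leb j a) eqn:E.
  apply Nat.leb_le in E. replace (Nat.ltb a j) with false by (symmetry; apply Nat.ltb_ge; lia). lra.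
  apply Nat.leb_gt in E. replace (Nat.ltb a j) with true by (symmetry; apply Nat.ltb_lt; lia).
  rewrite bin_nat_zero by lia. lra.
  rewrite su_plus. pose proof (bin_psum a M) as H1. change (fun i : nat => bin (INR a) i) with (bin (INR a)) in H1. pose proof (count_gt a M). lra. Qed.

Lemma nat_le_pow2 : forall n, INR n <= 2 ^ n.
Proof. induction n. simpl; lra. rewrite S_INR. simpl. pose proof (pow_R1_Rle 2 n ltac:(lra)). lra. Qed.

Lemma G_core : forall a b M, (b <= a)%nat -> (M <= S a + b)%nat ->
  sum_upto M (fun i => Vb (S a) i * Vb (S b) (M - i)%nat) <= 3 * 2 ^ (a + b).
Proof. intros a b M Hba HM.
  apply Rle_trans with (sum_upto M (fun i => Vb (S a) i * 2 ^ b)).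
  apply su_le. intros. apply Rmult_le_compat_l. apply Vb_nonneg. apply Vb_le_pow.
  rewrite (su_ext M _ (fun i => 2 ^ b * Vb (S a) i)) by (intros; ring). rewrite su_scal.
  pose proof (Vb_psum (S a) M) as HV. change (fun i : nat => Vb (S a) i) with (Vb (S a)) in HV. pose proof (nat_le_pow2 (M - S a)).
  assert (2 ^ (M - S a) <= 2 ^ a) by (apply Rle_pow; [lra | lia]).
  assert (0 <= 2 ^ b) by (apply pow_le; lra).
  apply Rle_trans with (2 ^ b * (2 ^ S a + 2 ^ a)). apply Rmult_le_compat_l; lra.
  rewrite pow_add. simpl. lra. Qed.

Lemma G_bound : forall rc rb xc xb M, INR rc <= xc <= INR rc + 1 -> INR rb <= xb <= INR rb + 1 ->
  (M <= rc + rb + 1)%nat -> conv (A xc) (A xb) M <= 3 * 2 ^ (rc + rb).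
Proof. intros rc rb xc xb M Hc Hb HM.
  destruct (le_lt_dec rb rc).
  - apply Rle_trans with (sum_upto M (fun i => Vb (S rc) i * Vb (S rb) (M - i)%nat)).
    unfold conv. apply su_le. intros. apply Rmult_le_compat; try apply A_nonneg; apply A_le_Vb; auto.
    apply G_core; lia.
  - rewrite conv_comm. rewrite Nat.add_comm.
    apply Rle_trans with (sum_upto M (fun i => Vb (S rb) i * Vb (S rc) (M - i)%nat)).
    unfold conv. apply su_le. intros. apply Rmult_le_compat; try apply A_nonneg; apply A_le_Vb; auto.
    apply G_core; lia. Qed.

Lemma tele : forall rho N, sum_upto N (fun j => if Nat.ltb rho j then 2 / INR (j - rho) - 2 / INR (S (j - rho)) else 0)
   = if Nat.ltb rho N then 2 - 2 / INR (S (N - rho)) else 0.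
Proof. intros rho N. induction N. simpl. destruct (Nat.ltb rho 0) eqn:E. apply Nat.ltb_lt in E; lia. reflexivity.
  rewrite su_S. rewrite IHN. destruct (Nat.ltb rho (S N)) eqn:E.
  - apply Nat.ltb_lt in E. destruct (Nat.ltb rho N) eqn:E2.
    + apply Nat.ltb_lt in E2. replace (S N - rho)%nat with (S (N - rho)) by lia. ring.
    + apply Nat.ltb_ge in E2. replace (S N - rho)%nat with 1%nat by lia. simpl. field.
  - apply Nat.ltb_ge in E. replace (Nat.ltb rho N) with false by (symmetry; apply Nat.ltb_ge; lia). ring. Qed.

Lemma badf_sum : forall rho a N, (1 <= rho)%nat -> INR rho <= a <= INR rho + 1 -> sum_upto N (badf a rho) <= 2.
Proof. intros rho a N Hr Ha.
  apply Rle_trans with (sum_upto N (fun j => if Nat.ltb rho j then 2 / INR (j - rho) - 2 / INR (S (j - rho)) else 0)).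
  apply su_le. intros j Hj. unfold badf. destruct (Nat.ltb rho j) eqn:E. 2: lra.
  apply Nat.ltb_lt in E. replace j with (S rho + (j - S rho))%nat at 1 by lia.
  eapply Rle_trans. apply A_tail2; auto. 
  replace (j - rho)%nat with (S (j - S rho)) by lia. set (p := (j - S rho)%nat).
  pose proof (pos_INR p). rewrite !S_INR. right. field. lra.
  rewrite tele. destruct (Nat.ltb rho N). 
  assert (0 < INR (S (N - rho))) by (apply lt_0_INR; lia). 
  assert (0 <= 2 / INR (S (N - rho))) by (unfold Rdiv; apply Rmult_le_pos; [lra | left; apply Rinv_0_lt_compat; lra]). lra. lra. Qed.

Lemma Q_bound : forall n rho rc rb a xc xb, (1 <= rho)%nat -> INR rho <= a <= INR rho + 1 ->
  INR rc <= xc <= INR rc + 1 -> INR rb <= xb <= INR rb + 1 -> (n <= rho + rc + rb + 2)%nat ->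
  LLg n (badf a rho) (A xc) (A xb) <= 6 * 2 ^ (rc + rb).
Proof. intros n rho rc rb a xc xb Hr Ha Hc Hb Hn. unfold LLg.
  apply Rle_trans with (sum_upto n (fun j => badf a rho j * (3 * 2 ^ (rc + rb)))).
  apply su_le. intros j Hj. unfold badf. destruct (Nat.ltb rho j) eqn:E. 2: lra.
  apply Nat.ltb_lt in E. apply Rmult_le_compat_l. apply A_nonneg. apply G_bound; auto. lia.
  rewrite (su_ext n _ (fun j => (3 * 2 ^ (rc + rb)) * badf a rho j)) by (intros; ring).
  rewrite su_scal. pose proof (badf_sum rho a n Hr Ha). pose proof (pow_le 2 (rc + rb) ltac:(lra)). nra. Qed.


Lemma lebesgue_LLg : forall n l1 l2 l3,
  lebesgue n l1 l2 l3 = LLg n (A (INR n * l1)) (A (INR n * l2)) (A (INR n * l3)).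
Proof. intros. unfold lebesgue, LLg, conv. apply su_ext. intros i Hi.
  rewrite <- su_scal. apply su_ext. intros j Hj. unfold lagr, fac_factor, A, bin.
  rewrite !Rabs_mult. ring. Qed.

Lemma frakL_LLg : forall n r1 r2 r3 a1 a2 a3, (1 <= n)%nat ->
  frakL n r1 r2 r3 a1 a2 a3 = LLg n (A (INR r1 + a1)) (A (INR r2 + a2)) (A (INR r3 + a3)).
Proof. intros. unfold frakL. rewrite lebesgue_LLg.
  assert (0 < INR n) by (apply lt_0_INR; lia).
  replace (INR n * ((INR r1 + a1) / INR n)) with (INR r1 + a1) by (field; lra).
  replace (INR n * ((INR r2 + a2) / INR n)) with (INR r2 + a2) by (field; lra).
  replace (INR n * ((INR r3 + a3) / INR n)) with (INR r3 + a3) by (field; lra). reflexivity. Qed.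

Lemma LLg_perm_312 : forall n f g h, LLg n f g h = LLg n h f g.
Proof. intros. rewrite LLg_swap12, LLg_swap23, LLg_swap12, LLg_swap23. reflexivity. Qed.

Lemma final_numeric : forall n s, (4 <= n)%nat -> (3 * s + 2 <= 2 * n)%nat ->
  18 * 2 ^ s <= Rpower 2 (2 * INR n / 3) * (10 + 2 * ln (INR n)).
Proof. intros n s Hn Hs.
  assert (Hln : 1 <= ln (INR n)).
  { rewrite <- (ln_exp 1) at 1. left. apply ln_increasing. apply exp_pos. pose proof exp_le_3. apply le_INR in Hn.
    simpl in Hn. lra. }
  assert (Hy : 3/2 <= Rpower 2 (2/3)).
  { set (y := Rpower 2 (2/3)). assert (0 < y) by (apply exp_pos).
    assert (y ^ 3 = 4).
    { rewrite <- Rpower_pow by lra. unfold y. rewrite Rpower_mult. 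
      replace (2 / 3 * INR 3) with (INR 2) by (simpl; field). rewrite Rpower_pow by lra. simpl; ring. }
    destruct (Rlt_le_dec y (3/2)). 2: lra.
    simpl in H0. assert (y * y < 9/4) by nra. nra. }
  assert (Hp : 2 ^ s * (3/2) <= Rpower 2 (2 * INR n / 3)).
  { rewrite <- Rpower_pow by lra. apply Rle_trans with (Rpower 2 (INR s) * Rpower 2 (2/3)).
    apply Rmult_le_compat_l. left; apply exp_pos. auto.
    rewrite <- Rpower_plus. apply Rle_Rpower. lra. apply le_INR in Hs.
    rewrite !plus_INR, !mult_INR in Hs. simpl in Hs. lra. }
  pose proof (pow_le 2 s ltac:(lra)). nra. Qed.


Theorem theorem1 (n r1 r2 r3 : nat) (a1 a2 a3 : R) :
  (4 <= n)%nat ->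
  (r1 + r2 + r3 = n - 1)%nat ->
  -1 < a1 < 1 -> 0 <= a2 < 1 -> 0 <= a3 < 1 ->
  a1 + a2 + a3 = 1 ->
  INR r1 + a1 >= INR r2 + a2 ->
  INR r1 + a1 >= INR r3 + a3 ->
  frakL n r1 r2 r3 a1 a2 a3 <=
    frakL n (n - 1) 0 0 a1 a2 a3
    + Rpower 2 (2 * INR n / 3) * (10 + 2 * ln (INR n)).
Proof.
  intros Hn Hr H1 H2 H3 Hs H12 H13.
  rewrite !frakL_LLg by lia.
  set (x1 := INR r1 + a1). set (x2 := INR r2 + a2). set (x3 := INR r3 + a3).
  assert (Hsum : x1 + x2 + x3 = INR n).
  { unfold x1, x2, x3. assert (INR r1 + INR r2 + INR r3 = INR n - 1).
    { rewrite <- !plus_INR. rewrite Hr. rewrite minus_INR by lia. simpl. ring. } lra. }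
  assert (Hrho : exists rho, INR rho <= x1 < INR rho + 1 /\ (n <= rho + r2 + r3 + 2)%nat /\ (rho + r2 + r3 + 1 <= n)%nat).
  { destruct (Rle_lt_dec 0 a1).
    - exists r1. unfold x1. split. lra. lia.
    - destruct r1 as [|r1']. 
      + exfalso. unfold x1 in *. simpl in H12. pose proof (pos_INR r2). lra.
      + exists r1'. unfold x1. rewrite S_INR. split. lra. lia. }
  destruct Hrho as [rho [Hx1 [Hn1 Hn2]]].
  assert (Hx1' : INR rho <= x1 <= INR rho + 1) by lra.
  assert (Hr2 : (r2 <= rho)%nat).
  { assert (INR r2 < INR rho + 1) by (unfold x1, x2 in *; lra). rewrite <- S_INR in H. apply INR_lt in H. lia. }
  assert (Hr3 : (r3 <= rho)%nat).
  { assert (INR r3 < INR rho + 1) by (unfold x1, x3 in *; lra). rewrite <- S_INR in H. apply INR_lt in H. lia. }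
  assert (Hrho1 : (1 <= rho)%nat).
  { destruct rho. exfalso. apply le_INR in Hn. simpl in Hn, Hx1. unfold x1, x2, x3 in *. lra. lia. }
  assert (Hx2 : INR r2 <= x2 <= INR r2 + 1) by (unfold x2; lra).
  assert (Hx3 : INR r3 <= x3 <= INR r3 + 1) by (unfold x3; lra).
  assert (Ha2 : INR 0 <= a2 <= INR 0 + 1) by (simpl; lra).
  assert (Ey : LLg n (A (INR (n - 1) + a1)) (A (INR 0 + a2)) (A (INR 0 + a3))
             = LLg n (A (x1 + INR r2 + INR r3)) (A a2) (A a3)).
  { replace (INR (n - 1) + a1) with (x1 + INR r2 + INR r3).
    replace (INR 0 + a2) with a2 by (simpl; ring). replace (INR 0 + a3) with a3 by (simpl; ring). reflexivity.
    unfold x1. rewrite <- Hr. rewrite !plus_INR. ring. }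
  rewrite Ey. clear Ey.
  assert (S2 : LLg n (A (x1 + INR r2)) (A a2) (A x3) <=
               LLg n (A (x1 + INR r2 + INR r3)) (A a2) (A a3) + 2 * (6 * 2 ^ (0 + r3))).
  { rewrite LLg_swap12. rewrite (LLg_swap12 n (A (x1 + INR r2 + INR r3))).
    eapply Rle_trans. apply (step_lemma n (A a2) (x1 + INR r2) a3 (rho + r2) r3).
    intros; apply A_nonneg. rewrite plus_INR; lra. lra.
    apply Rplus_le_compat_l. apply Rmult_le_compat_l. lra.
    rewrite LLg_swap12. apply Q_bound; auto. lia. rewrite plus_INR. lra. lia. }
  assert (Hpow : 0 <= 2 ^ r3) by (apply pow_le; lra).
  destruct r2 as [|r2'].
  -
    assert (E0 : LLg n (A x1) (A x2) (A x3) = LLg n (A (x1 + INR 0)) (A a2) (A x3)).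
    { unfold x2. simpl INR. replace (x1 + 0) with x1 by ring. replace (0 + a2) with a2 by ring. reflexivity. }
    rewrite E0. eapply Rle_trans. apply S2. apply Rplus_le_compat_l.
    pose proof (final_numeric n (0 + r3) Hn ltac:(lia)). simpl plus in *. lra.
  - set (r2 := S r2') in *.
    assert (S1 : LLg n (A x1) (A x2) (A x3) <= LLg n (A (x1 + INR r2)) (A a2) (A x3) + 2 * (6 * 2 ^ (r3 + r2))).
    { rewrite (LLg_perm_312 n (A x1)). unfold x2 at 1.
      eapply Rle_trans. apply (step_lemma n (A x3) x1 a2 rho r2). intros; apply A_nonneg. lra. lra.
      assert (E : LLg n (A x3) (A (x1 + INR r2)) (A a2) = LLg n (A (x1 + INR r2)) (A a2) (A x3)).
      { rewrite <- LLg_perm_312. reflexivity. }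
      rewrite E. apply Rplus_le_compat_l. apply Rmult_le_compat_l. lra.
      rewrite LLg_swap12. apply Q_bound; auto. lia. }
    assert (P : 2 ^ (0 + r3) * 2 <= 2 ^ (r3 + r2)).
    { simpl plus. rewrite pow_add. apply Rmult_le_compat_l; auto. unfold r2. simpl. pose proof (pow_R1_Rle 2 r2' ltac:(lra)). lra. }
    pose proof (final_numeric n (r3 + r2) Hn ltac:(lia)).
    lra.
Qed.
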